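(* For all parameters $a,b,a',b'$ and indeterminates $x_i,x_j$, \[ R_{12}(x_i,x_j)\,T_1(x_i;a,b)\,T_2(x_j;a',b')=T_2(x_j;a',b')\,T_1(x_i;a,b)\,R_{12}(x_i,x_j), \] where $R(x_i,x_j)$ is the matrix $R(\omega)$ with weights $\omega_1=bx_i+a'x_j$, $\omega_2=ax_i+b'x_j$, $\omega_3=-ax_i+a'x_j$, $\omega_4=bx_i-b'x_j$, $\omega_5=(a'+b')x_j$, $\omega_6=(a+b)x_i$.
   Context: Let $V=\mathbb{C}v_0\oplus\mathbb{C}v_1$ with matrix units $e_{ab}$ ($e_{ab}v_c=\delta_{bc}v_a$). For weights $\omega=(\omega_1,\dots,\omega_6)$ put $R(\omega)=e_{00}\otimes(\omega_1e_{00}+\omega_3e_{11})+e_{01}\otimes\omega_5e_{10}+e_{10}\otimes\omega_6e_{01}+e_{11}\otimes(\omega_4e_{00}+\omega_2e_{11})\in\operatorname{End}(V\otimes V)$. For the quantum space $V^{\otimes n}$ and an auxiliary space $V_s$ ($s=1,2$, copies of $V$), $T_s(x;a,b)=R_{sn}(\omega)\cdots R_{s1}(\omega)\in\operatorname{End}(V_s\otimes V^{\otimes n})$ with $\omega_1=\omega_3=\omega_5=1$, $\omega_2=ax$, $\omega_4=bx$, $\omega_6=(a+b)x$; $R_{sj}$ acts as $R$ on $V_s$ and the $j$-th factor of $V^{\otimes n}$, and $R_{12}$ acts as $R$ on $V_1\otimes V_2$. The identity is in $\operatorname{End}(V_1\otimes V_2\otimes V^{\otimes n})$. *)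

(* Defs.v *)
From HB Require Import structures.
From mathcomp Require Import all_boot all_order all_algebra.
Set Implicit Arguments. Unset Strict Implicit. Unset Printing Implicit Defensive.
Import GRing.Theory.
Local Open Scope ring_scope.

(* V = C v0 (+) C v1; basis vector v_c is indexed by c : bool (false = 0, true = 1).
   The total space V_1 (x) V_2 (x) V^{(x) n} has basis indexed by
   Idx n := {ffun 'I_(n.+2) -> bool}: position 0 is V_1, position 1 is V_2,
   position j.+2 (j < n) is the (j+1)-th tensor factor of V^{(x) n}.
   Operators are given by their matrix entries  A s t  (row s, column t). *)

Section Ops.
Variable R : comNzRingType.

Definition Idx (n : nat) := {ffun 'I_(n.+2) -> bool}.

Definition Op (n : nat) := Idx n -> Idx n -> R.

Definition mulOp n (A B : Op n) : Op n := fun s t => \sum_(u : Idx n) A s u * B u t.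

Definition idOp n : Op n := fun s t => (s == t)%:R.

(* local operators on V (x) V, entries indexed by (row1,row2) (col1,col2) *)
Definition Loc := bool -> bool -> bool -> bool -> R.

Definition eu (a b : bool) : bool -> bool -> R := fun r c => ((r == a) && (c == b))%:R.

Definition tens (A B : bool -> bool -> R) : Loc :=
  fun r1 r2 c1 c2 => A r1 c1 * B r2 c2.

Definition addLoc (A B : Loc) : Loc := fun r1 r2 c1 c2 => A r1 r2 c1 c2 + B r1 r2 c1 c2.
Definition addV (A B : bool -> bool -> R) : bool -> bool -> R := fun r c => A r c + B r c.
Definition sclV (w : R) (A : bool -> bool -> R) : bool -> bool -> R := fun r c => w * A r c.

Definition Rmat (w1 w2 w3 w4 w5 w6 : R) : Loc :=
  addLoc (tens (eu false false) (addV (sclV w1 (eu false false)) (sclV w3 (eu true true))))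
 (addLoc (tens (eu false true) (sclV w5 (eu true false)))
 (addLoc (tens (eu true false) (sclV w6 (eu false true)))
         (tens (eu true true) (addV (sclV w4 (eu false false)) (sclV w2 (eu true true)))))).

Definition embed n (p q : 'I_(n.+2)) (L : Loc) : Op n :=
  fun s t => L (s p) (s q) (t p) (t q) *
             [forall k : 'I_(n.+2), (k != p) && (k != q) ==> (s k == t k)]%:R.

Definition aux1 n : 'I_(n.+2) := inord 0.
Definition aux2 n : 'I_(n.+2) := inord 1.
(* the j-th quantum site, j = 1..n *)
Definition site n (j : nat) : 'I_(n.+2) := inord j.+1.

(* T_s(x;a,b) = R_{sn}(w) ... R_{s1}(w), w1=w3=w5=1, w2=ax, w4=bx, w6=(a+b)x *)
Definition Tmon n (s : 'I_(n.+2)) (x a b : R) : Op n :=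
  foldr (fun j acc => mulOp (embed s (site n j) (Rmat 1 (a * x) 1 (b * x) 1 ((a + b) * x))) acc)
        (@idOp n) (rev (iota 1 n)).

Definition R12 n (xi xj a b a' b' : R) : Op n :=
  embed (aux1 n) (aux2 n)
    (Rmat (b * xi + a' * xj) (a * xi + b' * xj) (- (a * xi) + a' * xj)
          (b * xi - b' * xj) ((a' + b') * xj) ((a + b) * xi)).
End Ops.

(* Main.v *)
Require Import Defs.
From HB Require Import structures.
From mathcomp Require Import all_boot all_order all_algebra.
From mathcomp Require Import ring zify.
From Stdlib Require Import FunctionalExtensionality.
Set Implicit Arguments. Unset Strict Implicit. Unset Printing Implicit Defensive.
Import GRing.Theory.
Local Open Scope ring_scope.

Section Gen.
Variable R : comNzRingType.
Variable n : nat.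
Implicit Types A B C : Op R n.

Lemma mulOpA A B C : mulOp (mulOp A B) C = mulOp A (mulOp B C).
Proof.
apply: functional_extensionality => s; apply: functional_extensionality => t.
rewrite /mulOp.
under eq_bigr do rewrite big_distrl.
under [RHS]eq_bigr do rewrite big_distrr.
rewrite exchange_big; apply: eq_bigr => u _; apply: eq_bigr => v _.
exact: (esym (mulrA _ _ _)).
Qed.

Lemma mul1Op A : mulOp (@idOp R n) A = A.
Proof.
apply: functional_extensionality => s; apply: functional_extensionality => t.
rewrite /mulOp /idOp (bigD1 s) //= eqxx mul1r big1 ?addr0 // => u.
by rewrite eq_sym => /negbTE ->; rewrite mul0r.
Qed.

Lemma mulOp1 A : mulOp A (@idOp R n) = A.
Proof.
apply: functional_extensionality => s; apply: functional_extensionality => t.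
rewrite /mulOp /idOp (bigD1 t) //= eqxx mulr1 big1 ?addr0 // => u.
by move=> /negbTE ->; rewrite mulr0.
Qed.

Variable m : nat.
Variable f : 'I_m -> 'I_(n.+2).
Hypothesis finj : injective f.

Definition LS := {ffun 'I_m -> bool}.
Definition rs (s : Idx n) : LS := [ffun i => s (f i)].
Definition off (s t : Idx n) := [forall k, [forall i, f i != k] ==> (s k == t k)].
Definition embedN (K : LS -> LS -> R) : Op R n :=
  fun s t => K (rs s) (rs t) * (off s t)%:R.
Definition mulL (K G : LS -> LS -> R) : LS -> LS -> R :=
  fun a c => \sum_b K a b * G b c.

Definition merge (s : Idx n) (v : LS) : Idx n :=
  [ffun k => if [pick i | f i == k] is Some i then v i else s k].

Lemma rs_merge s v : rs (merge s v) = v.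
Proof.
apply/ffunP => i; rewrite !ffunE.
case: pickP => [j /eqP /finj -> //|/(_ i)]; by rewrite eqxx.
Qed.

Lemma off_merge s v t : off (merge s v) t = off s t.
Proof.
apply/eq_forallb => k; rewrite ffunE.
case: pickP => [j /eqP <-|//].
have -> // : [forall i, f i != f j] = false.
by apply/negbTE/forallPn; exists j; rewrite negbK.
Qed.

Lemma off_refl s : off s s.
Proof. by apply/forallP => k; apply/implyP. Qed.

Lemma off_sm s v : off s (merge s v).
Proof.
apply/forallP => k; apply/implyP => /forallP Hk; rewrite ffunE.
by case: pickP => [j /eqP Hj|//]; have := Hk j; rewrite Hj eqxx.
Qed.

Lemma merge_rs s u : off s u -> merge s (rs u) = u.
Proof.
move=> /forallP H; apply/ffunP => k; rewrite !ffunE.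
case: pickP => [j /eqP <-|Hn]; first by rewrite ffunE.
have := H k; rewrite (_ : [forall i, f i != k]) //=; first by move/eqP.
by apply/forallP => i; rewrite Hn.
Qed.

Lemma mulN K G : mulOp (embedN K) (embedN G) = embedN (mulL K G).
Proof.
apply: functional_extensionality => s; apply: functional_extensionality => t.
rewrite /mulOp /embedN /mulL big_distrl /=.
rewrite (bigID (fun u => off s u)) /= [X in _ + X]big1 ?addr0; last first.
  by move=> u /negbTE ->; rewrite mulr0 mul0r.
rewrite (reindex (merge s)) /=; last first.
  exists rs => [v _|u]; first by rewrite rs_merge.
  by rewrite inE => /merge_rs.
rewrite (eq_bigl predT) => [|v]; last by rewrite off_sm.
apply: eq_bigr => v _.
rewrite rs_merge off_merge off_sm mulr1.
by rewrite mulrA.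
Qed.

Lemma natb_and (x y : bool) : (x && y)%:R = x%:R * y%:R :> R.
Proof. by case: x; case: y; rewrite /= ?mulr1 ?mulr0 ?mul0r. Qed.

Definition extL (i0 i1 : 'I_m) (L : Loc R) : LS -> LS -> R :=
  fun a c => L (a i0) (a i1) (c i0) (c i1) *
     [forall i, (i != i0) && (i != i1) ==> (a i == c i)]%:R.

Lemma liftN (i0 i1 : 'I_m) (L : Loc R) :
  embed (f i0) (f i1) L = embedN (extL i0 i1 L).
Proof.
apply: functional_extensionality => s; apply: functional_extensionality => t.
rewrite /embed /embedN /extL !ffunE -mulrA -natb_and; congr (_ * _%:R).
apply: (congr1 nat_of_bool). apply/idP/idP => [/forallP H|/andP [/forallP H1 /forallP H2]]; [apply/andP|apply/forallP => k].
  split; apply/forallP.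
    move=> i; apply/implyP => /andP [h0 h1]; rewrite !ffunE.
    have := H (f i); rewrite (inj_eq finj) h0 (inj_eq finj) h1; exact.
  move=> k; apply/implyP => /forallP Hk; have := H k.
  by rewrite eq_sym (Hk i0) eq_sym (Hk i1).
apply/implyP => /andP [hp hq].
case: (pickP (fun i => f i == k)) => [i /eqP Hi|Hn].
  rewrite -Hi !(inj_eq finj) in hp hq.
  by move: (H1 i); rewrite hp hq !ffunE Hi.
apply: (implyP (H2 k)); apply/forallP => i; by rewrite Hn.
Qed.

End Gen.

Section Three.
Variable R : comNzRingType.
Definition o0 : 'I_3 := @Ordinal 3 0 isT.
Definition o1 : 'I_3 := @Ordinal 3 1 isT.
Definition o2 : 'I_3 := @Ordinal 3 2 isT.
Definition tup3 (x y z : bool) : {ffun 'I_3 -> bool} :=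
  [ffun i : 'I_3 => match val i with 0 => x | 1 => y | _ => z end].

Lemma tup3_eta (a : {ffun 'I_3 -> bool}) : a = tup3 (a o0) (a o1) (a o2).
Proof.
apply/ffunP => -[[|[|[|i]]] Hi]; rewrite ffunE /=; congr (a _); exact: val_inj.
Qed.

Lemma sum3 (F : {ffun 'I_3 -> bool} -> R) :
  \sum_v F v = \sum_x \sum_y \sum_z F (tup3 x y z).
Proof.
rewrite (reindex (fun p : bool * (bool * bool) => tup3 p.1 p.2.1 p.2.2)) /=; last first.
  exists (fun v => (v o0, (v o1, v o2))) => [[x [y z]] _|v _] /=.
    by rewrite !ffunE.
  by rewrite -tup3_eta.
under [RHS]eq_bigr do rewrite pair_bigA.
by rewrite pair_bigA.
Qed.

Lemma forall3 (P : pred 'I_3) : [forall i, P i] = [&& P o0, P o1 & P o2].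
Proof.
apply/forallP/and3P => [H|[H0 H1 H2]]; first by split; apply: H.
by move=> [[|[|[|i]]] Hi] //; [rewrite (_ : Ordinal _ = o0) | rewrite (_ : Ordinal _ = o1) | rewrite (_ : Ordinal _ = o2)] => //; apply: val_inj.
Qed.

Variables (a b a' b' xi xj : R).
Definition LR := Rmat (b * xi + a' * xj) (a * xi + b' * xj) (- (a * xi) + a' * xj)
          (b * xi - b' * xj) ((a' + b') * xj) ((a + b) * xi).
Definition L1 := Rmat 1 (a * xi) 1 (b * xi) 1 ((a + b) * xi).
Definition L2 := Rmat 1 (a' * xj) 1 (b' * xj) 1 ((a' + b') * xj).

Definition rtab (w1 w2 w3 w4 w5 w6 : R) (r1 r2 c1 c2 : bool) : R :=
  match r1, r2, c1, c2 with
  | false, false, false, false => w1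
  | false, true, false, true => w3
  | false, true, true, false => w5
  | true, false, false, true => w6
  | true, false, true, false => w4
  | true, true, true, true => w2
  | _, _, _, _ => 0
  end.

Lemma RmatE w1 w2 w3 w4 w5 w6 :
  Rmat w1 w2 w3 w4 w5 w6 = rtab w1 w2 w3 w4 w5 w6.
Proof.
do 4 (apply: functional_extensionality => ?).
repeat match goal with |- context [?x] => is_var x; (match type of x with bool => case: x end) end;
  rewrite /Rmat /addLoc /tens /addV /sclV /eu /= ?mulr0n ?mulr1n; ring.
Qed.

Definition dl (x y : bool) : R := if x then (if y then 1 else 0) else (if y then 0 else 1).

Lemma natb_dl x y : (x == y)%:R = dl x y.
Proof. by case: x; case: y. Qed.

Definition K3 := bool -> bool -> bool -> bool -> bool -> bool -> R.
Definition ofK (k : K3) : {ffun 'I_3 -> bool} -> {ffun 'I_3 -> bool} -> R :=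
  fun u w => k (u o0) (u o1) (u o2) (w o0) (w o1) (w o2).
Definition sumb (F : bool -> R) := F true + F false.
Definition mulK (k g : K3) : K3 := fun x y z x' y' z' =>
  sumb (fun p => sumb (fun q => sumb (fun r => k x y z p q r * g p q r x' y' z'))).

Lemma mulL_ofK k g : mulL (ofK k) (ofK g) = ofK (mulK k g).
Proof.
apply: functional_extensionality => u; apply: functional_extensionality => w.
by rewrite /mulL sum3 /mulK /sumb !big_bool /ofK !ffunE /=.
Qed.

Definition k01 (L : Loc R) : K3 := fun x y z x' y' z' => L x y x' y' * dl z z'.
Definition k02 (L : Loc R) : K3 := fun x y z x' y' z' => L x z x' z' * dl y y'.
Definition k12 (L : Loc R) : K3 := fun x y z x' y' z' => L y z y' z' * dl x x'.

Lemma E01 (L : Loc R) : extL o0 o1 L = ofK (k01 L).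
Proof.
do 2 apply: functional_extensionality => ?.
by rewrite /extL forall3 /= ?andbT natb_dl.
Qed.
Lemma E02 (L : Loc R) : extL o0 o2 L = ofK (k02 L).
Proof.
do 2 apply: functional_extensionality => ?.
by rewrite /extL forall3 /= ?andbT natb_dl.
Qed.
Lemma E12 (L : Loc R) : extL o1 o2 L = ofK (k12 L).
Proof.
do 2 apply: functional_extensionality => ?.
by rewrite /extL forall3 /= ?andbT natb_dl.
Qed.

Lemma local3 :
  mulL (mulL (extL o0 o1 LR) (extL o0 o2 L1)) (extL o1 o2 L2) =
  mulL (mulL (extL o1 o2 L2) (extL o0 o2 L1)) (extL o0 o1 LR).
Proof.
rewrite E01 E02 E12 !mulL_ofK /ofK /LR /L1 /L2 !RmatE.
do 2 apply: functional_extensionality => ?.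
move: (_ o0) (_ o1) (_ o2) (_ o0) (_ o1) (_ o2) => [] [] [] [] [] [];
 cbv beta iota delta [mulK sumb k01 k02 k12 dl rtab]; ring.
Qed.
End Three.

Section Four.
Variable R : comNzRingType.
Definition q0 : 'I_4 := @Ordinal 4 0 isT.
Definition q1 : 'I_4 := @Ordinal 4 1 isT.
Definition q2 : 'I_4 := @Ordinal 4 2 isT.
Definition q3 : 'I_4 := @Ordinal 4 3 isT.
Definition tup4 (x y z t : bool) : {ffun 'I_4 -> bool} :=
  [ffun i : 'I_4 => match val i with 0 => x | 1 => y | 2 => z | _ => t end].

Lemma tup4_eta (a : {ffun 'I_4 -> bool}) : a = tup4 (a q0) (a q1) (a q2) (a q3).
Proof.
apply/ffunP => -[[|[|[|[|i]]]] Hi]; rewrite ffunE /=; congr (a _); exact: val_inj.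
Qed.

Lemma sum4 (F : {ffun 'I_4 -> bool} -> R) :
  \sum_v F v = \sum_x \sum_y \sum_z \sum_t F (tup4 x y z t).
Proof.
rewrite (reindex (fun p : bool * (bool * (bool * bool)) => tup4 p.1 p.2.1 p.2.2.1 p.2.2.2)) /=; last first.
  exists (fun v => (v q0, (v q1, (v q2, v q3)))) => [[x [y [z t]]] _|v _] /=.
    by rewrite !ffunE.
  by rewrite -tup4_eta.
under [RHS]eq_bigr do under eq_bigr do rewrite pair_bigA.
under [RHS]eq_bigr do rewrite pair_bigA.
by rewrite pair_bigA.
Qed.

Lemma forall4 (P : pred 'I_4) : [forall i, P i] = [&& P q0, P q1, P q2 & P q3].
Proof.
apply/forallP/and4P => [H|[H0 H1 H2 H3]]; first by split; apply: H.
by move=> [[|[|[|[|i]]]] Hi] //;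
  [rewrite (_ : Ordinal _ = q0) | rewrite (_ : Ordinal _ = q1)
  | rewrite (_ : Ordinal _ = q2) | rewrite (_ : Ordinal _ = q3)] => //; apply: val_inj.
Qed.

Definition K4 := bool -> bool -> bool -> bool -> bool -> bool -> bool -> bool -> R.
Definition ofK4 (k : K4) : {ffun 'I_4 -> bool} -> {ffun 'I_4 -> bool} -> R :=
  fun u w => k (u q0) (u q1) (u q2) (u q3) (w q0) (w q1) (w q2) (w q3).
Definition mulK4 (k g : K4) : K4 := fun x y z t x' y' z' t' =>
  sumb (fun p => sumb (fun q => sumb (fun r => sumb (fun s =>
    k x y z t p q r s * g p q r s x' y' z' t')))).

Lemma mulL_ofK4 k g : mulL (ofK4 k) (ofK4 g) = ofK4 (mulK4 k g).
Proof.
apply: functional_extensionality => u; apply: functional_extensionality => w.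
by rewrite /mulL sum4 /mulK4 /sumb !big_bool /ofK4 !ffunE /=.
Qed.

Definition k01' (L : Loc R) : K4 := fun x y z t x' y' z' t' =>
  L x y x' y' * (dl R z z' * dl R t t').
Definition k23' (L : Loc R) : K4 := fun x y z t x' y' z' t' =>
  L z t z' t' * (dl R x x' * dl R y y').

Lemma F01 (L : Loc R) : extL q0 q1 L = ofK4 (k01' L).
Proof.
do 2 apply: functional_extensionality => ?.
by rewrite /extL forall4 /= ?andbT natb_and !natb_dl.
Qed.
Lemma F23 (L : Loc R) : extL q2 q3 L = ofK4 (k23' L).
Proof.
do 2 apply: functional_extensionality => ?.
by rewrite /extL forall4 /= ?andbT natb_and !natb_dl.
Qed.

Lemma local4 (A B : Loc R) :
  mulL (extL q0 q1 A) (extL q2 q3 B) = mulL (extL q2 q3 B) (extL q0 q1 A).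
Proof.
rewrite F01 F23 !mulL_ofK4 /ofK4.
do 2 apply: functional_extensionality => ?.
move: (_ q0) (_ q1) (_ q2) (_ q3) (_ q0) (_ q1) (_ q2) (_ q3) => [] [] [] [] [] [] [] [];
 cbv beta iota delta [mulK4 sumb k01' k23' dl]; ring.
Qed.
End Four.

Section Main.
Variable R : comNzRingType.
Variable n : nat.
Variables (a b a' b' xi xj : R).

Definition valid (j : nat) := (0 < j <= n)%N.

Lemma val_aux1 : nat_of_ord (aux1 n) = 0%N. Proof. by rewrite /aux1 inordK. Qed.
Lemma val_aux2 : nat_of_ord (aux2 n) = 1%N. Proof. by rewrite /aux2 inordK. Qed.
Lemma val_site j : valid j -> nat_of_ord (site n j) = j.+1.
Proof. by move=> /andP [_ H]; rewrite /site inordK // ltnS. Qed.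

Definition f3 (j : nat) (i : 'I_3) : 'I_(n.+2) :=
  match val i with 0 => aux1 n | 1 => aux2 n | _ => site n j end.
Definition f4 (k j : nat) (i : 'I_4) : 'I_(n.+2) :=
  match val i with 0 => aux1 n | 1 => site n k | 2 => aux2 n | _ => site n j end.

Lemma f3_inj j : valid j -> injective (f3 j).
Proof.
move=> Hj [[|[|[|i]]] Hi] [[|[|[|i']]] Hi'] //= H; try (by apply: val_inj);
 move/(congr1 (@nat_of_ord _)): H; rewrite ?val_aux1 ?val_aux2 ?val_site //;
 move: Hj => /andP [] => *; exfalso; lia.
Qed.

Lemma f4_inj k j : valid k -> valid j -> k != j -> injective (f4 k j).
Proof.
move=> Hk Hj Hkj [[|[|[|[|i]]]] Hi] [[|[|[|[|i']]]] Hi'] //= H; try (by apply: val_inj);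
 move/(congr1 (@nat_of_ord _)): H; rewrite ?val_aux1 ?val_aux2 ?val_site //;
 move: Hk Hj Hkj => /andP [] ? ? /andP [] ? ? /eqP ? ?; exfalso; lia.
Qed.

Definition E1 j := embed (aux1 n) (site n j) (L1 a b xi).
Definition E2 j := embed (aux2 n) (site n j) (L2 a' b' xj).
Definition RR := embed (aux1 n) (aux2 n) (LR a b a' b' xi xj).

Lemma triple j : valid j ->
  mulOp (mulOp RR (E1 j)) (E2 j) = mulOp (mulOp (E2 j) (E1 j)) RR.
Proof.
move=> Hj; rewrite /RR /E1 /E2.
rewrite -[aux1 n]/(f3 j o0) -[aux2 n]/(f3 j o1) -[site n j]/(f3 j o2).
rewrite !(liftN (f3_inj Hj)) !(mulN (f3_inj Hj)).
by rewrite local3.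
Qed.

Lemma comm12 k j : valid k -> valid j -> k != j ->
  mulOp (E1 k) (E2 j) = mulOp (E2 j) (E1 k).
Proof.
move=> Hk Hj Hkj; rewrite /E1 /E2.
rewrite -[aux1 n]/(f4 k j q0) -[site n k]/(f4 k j q1) -[aux2 n]/(f4 k j q2)
  -[site n j]/(f4 k j q3).
rewrite !(liftN (f4_inj Hk Hj Hkj)) !(mulN (f4_inj Hk Hj Hkj)).
by rewrite local4.
Qed.


Definition P1 l := foldr (fun j acc => mulOp (E1 j) acc) (@idOp R n) l.
Definition P2 l := foldr (fun j acc => mulOp (E2 j) acc) (@idOp R n) l.

Lemma comm_P1 l j : all valid l -> valid j -> j \notin l ->
  mulOp (P1 l) (E2 j) = mulOp (E2 j) (P1 l).
Proof.
elim: l => [|k l IH] /=; first by rewrite mul1Op mulOp1.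
move=> /andP [Hk Hl] Hj; rewrite inE negb_or => /andP [Hjk Hjl].
rewrite mulOpA IH // -mulOpA comm12 ?mulOpA //.
by rewrite eq_sym.
Qed.

Lemma comm_P2 l j : all valid l -> valid j -> j \notin l ->
  mulOp (E1 j) (P2 l) = mulOp (P2 l) (E1 j).
Proof.
elim: l => [|k l IH] /=; first by rewrite mul1Op mulOp1.
move=> /andP [Hk Hl] Hj; rewrite inE negb_or => /andP [Hjk Hjl].
by rewrite -mulOpA comm12 // mulOpA IH // mulOpA.
Qed.

Lemma mainL l : all valid l -> uniq l ->
  mulOp (mulOp RR (P1 l)) (P2 l) = mulOp (mulOp (P2 l) (P1 l)) RR.
Proof.
elim: l => [|j l IH] /=; first by rewrite !mulOp1 !mul1Op.
move=> /andP [Hj Hl] /andP [Hjl Hu].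
transitivity (mulOp (mulOp (mulOp RR (E1 j)) (E2 j)) (mulOp (P1 l) (P2 l))).
  by rewrite !mulOpA -(mulOpA (P1 l) (E2 j)) comm_P1 // !mulOpA.
rewrite triple //.
transitivity (mulOp (mulOp (E2 j) (E1 j)) (mulOp (mulOp RR (P1 l)) (P2 l))).
  by rewrite !mulOpA.
rewrite IH //.
by rewrite !mulOpA -(mulOpA (P2 l) (E1 j)) -comm_P2 // !mulOpA.
Qed.

End Main.

Unset Implicit Arguments.
Theorem proposition4p15 (R : comNzRingType) (n : nat) (a b a' b' xi xj : R) :
  forall s t : Idx n,
    mulOp (mulOp (@R12 R n xi xj a b a' b') (@Tmon R n (aux1 n) xi a b))
          (@Tmon R n (aux2 n) xj a' b') s t
  = mulOp (mulOp (@Tmon R n (aux2 n) xj a' b') (@Tmon R n (aux1 n) xi a b))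
          (@R12 R n xi xj a b a' b') s t.
Proof.
move=> s t.
have Hv : all (valid n) (rev (iota 1 n)).
  by rewrite all_rev; apply/allP => j; rewrite mem_iota /valid; lia.
have Hu : uniq (rev (iota 1 n)) by rewrite rev_uniq iota_uniq.
have H := mainL a b a' b' xi xj Hv Hu.
exact: (congr1 (fun A => A s t) H).
Qed.
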